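(* (a) $\mathsf{P}=\mathsf{U_{tot}P}=\mathsf{Few_{tot}P}$. (b) If $\mathsf{FewP}\subseteq\mathsf{Few_{tot}P}$, then $\mathsf{P}=\mathsf{FewP}$.
   Context: An NPTM is a non-deterministic polynomial-time Turing machine. For an NPTM $M$ and input $x$, $acc_M(x)$ is the number of accepting paths of $M$ on $x$ and $tot_M(x)$ is the number of all computation paths of $M$ on $x$ minus $1$. $\#\mathsf{P}=\{acc_M\}$, $\mathsf{TotP}=\{tot_M\}$ over all NPTMs $M$. $\mathsf{U_{tot}P}$ is the class of languages $L$ for which there is $f\in\mathsf{TotP}$ with $f(x)=1$ if $x\in L$ and $f(x)=0$ if $x\notin L$. $\mathsf{FewP}$ is the class of languages $L$ for which there are $f\in\#\mathsf{P}$ and a polynomial $p$ such that $0<f(x)\le p(|x|)$ if $x\in L$ and $f(x)=0$ if $x\notin L$; $\mathsf{Few_{tot}P}$ is defined identically with $f\in\mathsf{TotP}$. *)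

(* Defs.v *)
From mathcomp Require Import all_boot.
Set Implicit Arguments. Unset Strict Implicit. Unset Printing Implicit Defensive.

Inductive move := MoveL | MoveR | Stay.

(* On input x (a binary word) the tape
   initially holds the symbols [inp b] of x, head on the first one, and
   blanks elsewhere.  From state q reading symbol a, the machine may
   perform any transition in [delta q a]; it halts when this list is empty,
   and the halting path is accepting iff the final state is in [accq]. *)
Record NTM := {
  Q : finType;
  Gam : finType;
  blank : Gam;
  inp : bool -> Gam;
  inp_inj : injective inp;
  inp_nblank : forall b, inp b != blank;
  q0 : Q;
  accq : pred Q;
  delta : Q -> Gam -> seq (Q * Gam * move)
}.

(* configuration: state, tape left of head (nearest first), scanned
   symbol, tape right of head (nearest first) *)
Definition config (M : NTM) : Type := (Q M * seq (Gam M) * Gam M * seq (Gam M))%type.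

Definition init_config (M : NTM) (x : seq bool) : config M :=
  match x with
  | [::] => (q0 M, [::], blank M, [::])
  | b :: x' => (q0 M, [::], inp M b, map (inp M) x')
  end.

Definition apply_trans (M : NTM) (c : config M) (t : Q M * Gam M * move)
  : config M :=
  let: (_, l, _, r) := c in
  let: (q', a', m) := t in
  match m with
  | Stay => (q', l, a', r)
  | MoveL => match l with
             | [::] => (q', [::], blank M, a' :: r)
             | b :: l' => (q', l', b, a' :: r)
             end
  | MoveR => match r with
             | [::] => (q', a' :: l, blank M, [::])
             | b :: r' => (q', a' :: l, b, r')
             end
  end.

Definition succs (M : NTM) (c : config M) : seq (config M) :=
  let: (q, _, a, _) := c in map (apply_trans c) (@delta M q a).

Definition terminal (M : NTM) (c : config M) : bool := nilp (succs c).

Fixpoint halts_within (M : NTM) (n : nat) (c : config M) : bool :=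
  if terminal c then true else
  match n with
  | 0 => false
  | n'.+1 => all (halts_within n') (succs c)
  end.

Fixpoint npaths (M : NTM) (n : nat) (c : config M) : nat :=
  if terminal c then 1 else
  match n with
  | 0 => 0
  | n'.+1 => sumn (map (npaths n') (succs c))
  end.

Fixpoint naccpaths (M : NTM) (n : nat) (c : config M) : nat :=
  if terminal c then (@accq M c.1.1.1 : nat) else
  match n with
  | 0 => 0
  | n'.+1 => sumn (map (naccpaths n') (succs c))
  end.

(* polynomial bound of the shape c * n^c + c (dominates every polynomial) *)
Definition pbound (k n : nat) : nat := k * n ^ k + k.

Definition poly_time_with (M : NTM) (k : nat) : Prop :=
  forall x : seq bool, halts_within (pbound k (size x)) (init_config M x).

Definition poly_time (M : NTM) : Prop := exists k, poly_time_with M k.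

Definition deterministic (M : NTM) : Prop :=
  forall q a, size (@delta M q a) <= 1.

Definition acc (M : NTM) (k : nat) (x : seq bool) : nat :=
  naccpaths (pbound k (size x)) (init_config M x).
Definition tot (M : NTM) (k : nat) (x : seq bool) : nat :=
  (npaths (pbound k (size x)) (init_config M x)).-1.

Definition language := seq bool -> Prop.
Definition lclass := language -> Prop.
Definition fclass := (seq bool -> nat) -> Prop.

Definition sharpP : fclass := fun f =>
  exists (M : NTM) (k : nat), poly_time_with M k /\ forall x, f x = acc M k x.

Definition TotP : fclass := fun f =>
  exists (M : NTM) (k : nat), poly_time_with M k /\ forall x, f x = tot M k x.

Definition classP : lclass := fun L =>
  exists (M : NTM) (k : nat), deterministic M /\ poly_time_with M k /\
    forall x, L x <-> acc M k x = 1.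

Definition UtotP : lclass := fun L =>
  exists f, TotP f /\ forall x, (L x -> f x = 1) /\ (~ L x -> f x = 0).

Definition FewP : lclass := fun L =>
  exists f, sharpP f /\ exists c, forall x,
    (L x -> 0 < f x <= pbound c (size x)) /\ (~ L x -> f x = 0).

Definition FewtotP : lclass := fun L =>
  exists f, TotP f /\ exists c, forall x,
    (L x -> 0 < f x <= pbound c (size x)) /\ (~ L x -> f x = 0).

Definition class_eq (C D : lclass) : Prop := forall L, C L <-> D L.
Definition class_sub (C D : lclass) : Prop := forall L, C L -> D L.

(* Main.v *)
Require Import Defs.
From mathcomp Require Import all_boot.
From Stdlib Require Import Classical.
Set Implicit Arguments. Unset Strict Implicit. Unset Printing Implicit Defensive.

Section Gen.
Variable M : NTM.

Lemma halts_mono n m (c : config M) : n <= m -> halts_within n c -> halts_within m c.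
Proof.
elim: n m c => [|n IH] [|m] c //= le; case: (terminal c) => //.
move=> H; apply: sub_all H => x; exact: IH.
Qed.

Lemma npaths_stable n m (c : config M) : n <= m -> halts_within n c -> npaths m c = npaths n c.
Proof.
elim: n m c => [|n IH] [|m] c //= le; case: (terminal c) => //.
move/allP=> H; congr sumn; apply/eq_in_map => x Hx; apply: IH => //; exact: H.
Qed.

Lemma naccpaths_stable n m (c : config M) : n <= m -> halts_within n c -> naccpaths m c = naccpaths n c.
Proof.
elim: n m c => [|n IH] [|m] c //= le; case: (terminal c) => //.
move/allP=> H; congr sumn; apply/eq_in_map => x Hx; apply: IH => //; exact: H.
Qed.

Lemma npaths_pos n (c : config M) : halts_within n c -> 0 < npaths n c.
Proof.
elim: n c => [|n IH] c /=; rewrite /terminal; case: (succs c) => [|x s] //=.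
case/andP=> hx _; rewrite addn_gt0 IH //.
Qed.

Lemma sumn_ge2 n (c : config M) : halts_within n.+1 c -> 1 < size (succs c) ->
  1 < npaths n.+1 c.
Proof.
rewrite /= /terminal; case: (succs c) => [|x [|y s]] //= /and3P[hx hy _] _.
rewrite addnA; apply: leq_trans (leq_addr _ _).
by rewrite -(addn1 1) leq_add // npaths_pos.
Qed.

Lemma nacc_le1 n (c : config M) : deterministic M -> naccpaths n c <= 1.
Proof.
move=> D; elim: n c => [|n IH] c /=; case: (terminal c); rewrite ?leq_b1 //.
have : size (succs c) <= 1 by case: c => [[[q l] a] r]; rewrite /= size_map D.
case: (succs c) => [|x [|y s]] //= _; rewrite addn0; exact: IH.
Qed.
End Gen.

Section M2.
Variable M : NTM.

Definition liftT (t : Q M * Gam M * move) : option (Q M) * Gam M * move :=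
  (Some t.1.1, t.1.2, t.2).

Definition M2 : NTM :=
 {| Q := option (Q M); Gam := Gam M; blank := blank M; inp := @inp M;
    inp_inj := @inp_inj M; inp_nblank := @inp_nblank M; q0 := Some (q0 M);
    accq := fun q => q == None;
    delta := fun q a => match q with None => [::]
       | Some q => if 1 < size (delta q a) then [:: (None, a, Stay)]
                   else map liftT (delta q a) end |}.

Definition lc (c : config M) : config M2 :=
  let: (q, l, a, r) := c in (Some q, l, a, r).

Lemma apply_lc c t : apply_trans (lc c) (liftT t) = lc (apply_trans c t).
Proof.
case: c => [[[q l] a] r]; case: t => [[q' a'] []] /=; by [case: l| case: r|].
Qed.

Lemma halts_S (N : NTM) n (c : config N) : halts_within n.+1 c =
  if terminal c then true else all (halts_within n) (succs c).
Proof. by []. Qed.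
Lemma npaths_S (N : NTM) n (c : config N) : npaths n.+1 c =
  if terminal c then 1 else sumn (map (npaths n) (succs c)).
Proof. by []. Qed.
Lemma naccpaths_S (N : NTM) n (c : config N) : naccpaths n.+1 c =
  if terminal c then (accq c.1.1.1 : nat) else sumn (map (naccpaths n) (succs c)).
Proof. by []. Qed.

Lemma succs_lc c : size (succs c) <= 1 -> succs (lc c) = map lc (succs c).
Proof.
case: c => [[[q l] a] r]; rewrite /= size_map leqNgt => /negbTE ->.
rewrite -map_comp -map_comp; apply: eq_map => t; exact: (apply_lc (q, l, a, r)).
Qed.

Lemma M2_main n c : halts_within n c ->
  halts_within n.+1 (lc c) /\ naccpaths n.+1 (lc c) = (1 < npaths n c).
Proof.
elim: n c => [|n IH] c.
  case: c => [[[q l] a] r]; rewrite /= /terminal /=.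
  by case: (delta q a).
move=> H; case: (ltnP 1 (size (succs c))) => Hs.
  rewrite (sumn_ge2 H Hs).
  move: Hs; case: c {H} => [[[q l] a] r]; rewrite /= size_map => Hs.
  by rewrite /terminal /= Hs /=.
have E := succs_lc Hs.
move: H; rewrite halts_S npaths_S halts_S naccpaths_S /terminal E.
move: Hs; case: (succs c) => [|x [|y s]] //= _.
  by case: c {E} => [[[q l] a] r].
rewrite !andbT !addn0 => /IH [h1 h2]; split; [exact: h1 | exact: h2].
Qed.
End M2.

Section M1.
Variable M : NTM.
Hypothesis D : deterministic M.

Definition M1 : NTM :=
 {| Q := option (Q M); Gam := Gam M; blank := blank M; inp := @inp M;
    inp_inj := @inp_inj M; inp_nblank := @inp_nblank M; q0 := Some (q0 M);
    accq := fun q => false;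
    delta := fun q a => match q with None => [::]
       | Some q => if nilp (delta q a) && accq q then [:: (None, a, Stay); (None, a, Stay)]
                   else map (@liftT M) (delta q a) end |}.

Definition lc1 (c : config M) : config M1 :=
  let: (q, l, a, r) := c in (Some q, l, a, r).

Lemma succs_lc1 c : (nilp (succs c) && accq c.1.1.1) = false ->
  succs (lc1 c) = map lc1 (succs c).
Proof.
case: c => [[[q l] a] r]; rewrite /= /nilp size_map => ->.
rewrite -map_comp -map_comp; apply: eq_map => t; exact: (apply_lc (q, l, a, r)).
Qed.

Lemma M1_main n c : halts_within n c ->
  halts_within n.+1 (lc1 c) /\ npaths n.+1 (lc1 c) = (naccpaths n c).+1.
Proof.
elim: n c => [|n IH] c.
  case: c => [[[q l] a] r]; rewrite /= /terminal /= /nilp size_map.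
  by case: (delta q a) => //=; case: (accq q).
case Ht: (terminal c).
  move=> _; move: Ht; case: c => [[[q l] a] r]; rewrite /= /terminal /= !/nilp size_map => /eqP/size0nil ->.
  by case: (accq q).
have Hs : size (succs c) <= 1 by case: c {Ht} => [[[q l] a] r]; rewrite /= size_map D.
have E : succs (lc1 c) = map lc1 (succs c) by apply: succs_lc1; move: Ht; rewrite /terminal => ->.
rewrite halts_S npaths_S naccpaths_S halts_S Ht /terminal E.
move: Ht Hs; rewrite /terminal; case: (succs c) => [|x [|y s]] //= _ _.
rewrite !andbT !addn0 => /IH [h1 h2]; split; [exact: h1 | exact: h2].
Qed.
End M1.

Lemma pbound_S k n : (pbound k n).+1 <= pbound k.+1 n.
Proof.
rewrite /pbound addnS ltnS leq_add2r.
case: n => [|n]; first by case: k => [|k]; rewrite ?mul0n // !exp0n ?muln0.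
rewrite expnS mulnA; apply: leq_mul => //.
by apply: leq_trans (leqnSn k) _; apply: leq_pmulr.
Qed.

Lemma P_sub_Utot : class_sub classP UtotP.
Proof.
move=> L [M [k [D [PT HL]]]].
have Ei x : init_config (M1 M) x = lc1 (init_config M x) by case: x.
have key x : halts_within (pbound k.+1 (size x)) (init_config (M1 M) x) /\
   tot (M1 M) k.+1 x = acc M k x.
  have [h1 h2] := M1_main D (PT x).
  rewrite /tot /acc Ei; split; first exact: halts_mono (pbound_S _ _) h1.
  by rewrite (npaths_stable (pbound_S _ _) h1) h2.
exists (tot (M1 M) k.+1); split.
  by exists (M1 M), k.+1; split => // x; case: (key x).
move=> x; have [_ ->] := key x; split; first by move/HL.
move=> nL; have := nacc_le1 (pbound k (size x)) (init_config M x) D.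
move: (HL x); rewrite /acc; case: (naccpaths _ _) => [|[|m]] //= H.
by case: nL; apply/H.
Qed.

Lemma Fewtot_sub_P : class_sub FewtotP classP.
Proof.
move=> L [f [[M [k [PT Hf]]] [c HL]]].
have Ei x : init_config (M2 M) x = lc (init_config M x) by case: x.
have key x : halts_within (pbound k.+1 (size x)) (init_config (M2 M) x) /\
   acc (M2 M) k.+1 x = (1 < npaths (pbound k (size x)) (init_config M x)).
  have [h1 h2] := M2_main (PT x).
  rewrite /acc Ei; split; first exact: halts_mono (pbound_S _ _) h1.
  by rewrite (naccpaths_stable (pbound_S _ _) h1) h2.
exists (M2 M), k.+1; split.
  move=> [q|] a //=; case: ifP => //; rewrite size_map ltnNge; by move/negbFE.
split; first by move=> x; case: (key x).
move=> x; have [_ ->] := key x; have [H1 H2] := HL x.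
rewrite Hf /tot in H1 H2; split.
  move/H1 => /andP[h _]; move: h.
  by case: (npaths _ _) => [|[|m]].
move=> h; apply: NNPP => nL; move: (H2 nL) h.
by case: (npaths _ _) => [|[|m]].
Qed.

Lemma Utot_sub_Fewtot : class_sub UtotP FewtotP.
Proof.
move=> L [f [Tf HL]]; exists f; split => //; exists 1 => x.
have [H1 H2] := HL x; split => // /H1 ->. by rewrite /pbound addn1.
Qed.

Lemma P_sub_Few : class_sub classP FewP.
Proof.
move=> L [M [k [D [PT HL]]]].
exists (acc M k); split; first by exists M, k.
exists 1 => x; split; first by move/HL => ->; rewrite /pbound addn1.
move=> nL; have := nacc_le1 (pbound k (size x)) (init_config M x) D.
move: (HL x); rewrite /acc; case: (naccpaths _ _) => [|[|m]] //= H.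
by case: nL; apply/H.
Qed.

Theorem proposition6 :
  (class_eq classP UtotP /\ class_eq UtotP FewtotP) /\
  (class_sub FewP FewtotP -> class_eq classP FewP).
Proof.
split; first split.
- move=> L; split; first exact: P_sub_Utot.
  by move=> H; apply: Fewtot_sub_P; apply: Utot_sub_Fewtot.
- move=> L; split; first exact: Utot_sub_Fewtot.
  by move=> H; apply: P_sub_Utot; apply: Fewtot_sub_P.
- move=> Hsub L; split; first exact: P_sub_Few.
  by move=> H; apply: Fewtot_sub_P; apply: Hsub.
Qed.
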